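(* Let $k\ge m_k\ge 1$ be integers, let $(x^{(k-m_k)},\dots,x^{(k)})$ be vectors in $U\cap\Sigma\setminus\{x_*\}$, let $t>0$, and set $r^{(k-m_k+i)}=f(x^{(k-m_k+i)})$ for $i=0,\dots,m_k$. Assume $$\forall i\in\{1,\dots,m_k\},\quad d^{(k)}_i\ \ge\ t\max_{j\in\{i,\dots,m_k\}}\|r^{(k-m_k+j)}\|_2 .$$ Then $r^{(k-m_k)},\dots,r^{(k)}$ are affinely independent (so $m_k\le p$), there is a unique $\tilde c\in\mathbb{R}^{m_k+1}$ with $\sum_{i=0}^{m_k}\tilde c_i=1$ and $\|\sum_{i=0}^{m_k}\tilde c_i r^{(k-m_k+i)}\|_2=\mathrm{dist}_2(0,\mathcal{A}^{(k)}_{m_k})$, and there is a constant $C_{m_k}>0$ depending only on $m_k$ such that $$\|\tilde c\|_\infty\le C_{m_k}(1+t^{-m_k}).$$ Assume moreover that $\tilde x^{(k+1)}=\sum_{i=0}^{m_k}\tilde c_i x^{(k-m_k+i)}$, $g(\tilde x^{(k+1)})$ and $\sum_{i=0}^{m_k}\tilde c_i g(x^{(k-m_k+i)})$ all belong to $U$, and define $x^{(k+1)}=g(\tilde x^{(k+1)})$ (version P, with $\Sigma$ arbitrary) or $x^{(k+1)}=\sum_{i=0}^{m_k}\tilde c_i g(x^{(k-m_k+i)})$ (version A, in the case $\Sigma=\mathbb{R}^n$), $r^{(k+1)}=f(x^{(k+1)})$ and $d^{(k)}_{m_k+1}=\mathrm{dist}_2(r^{(k+1)},\mathcal{A}^{(k)}_{m_k})$.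 Then there is a constant $\kappa>0$ (depending only on $f,g,x_*,\Sigma,U,K,\sigma,p$, not on $t$, $k$ or the vectors) such that $$\|r^{(k+1)}\|_2\le K\,\mathrm{dist}_2(0,\mathcal{A}^{(k)}_{m_k})+\kappa(1+t^{-2m_k})\max_{0\le i\le m_k}\|r^{(k-m_k+i)}\|_2^2$$ and $$(1-K)\|r^{(k+1)}\|_2\le K\,d^{(k)}_{m_k+1}+\kappa(1+t^{-2m_k})\max_{0\le i\le m_k}\|r^{(k-m_k+i)}\|_2^2 .$$
   Context: All norms $\|\cdot\|_2$ are Euclidean (Frobenius for operators where relevant). Let $n,p\ge1$ be integers, $\Sigma$ a smooth submanifold of $\mathbb{R}^n$, $V\subset\mathbb{R}^n$ open, $f\in\mathscr{C}^2(V,\mathbb{R}^p)$, $g\in\mathscr{C}^2(V,\Sigma)$ (i.e. $g$ is $\mathscr C^2$ on $V$ with values in $\Sigma$), and $x_*\in V\cap\Sigma$ with $g(x_* )=x_*$, $f(x_* )=0$. Assumption 1: there is $K\in(0,1)$ with $\|f(g(x))\|_2\le K\|f(x)\|_2$ for all $x\in V\cap g^{-1}(V)\cap\Sigma$. Assumption 2: there is $\sigma>0$ with $\sigma\|x-x_*\|_2\le\|f(x)\|_2$ for all $x\in V\cap\Sigma$. Both assumptions are in force. $U\subset V\cap g^{-1}(V)$ is a fixed open neighbourhood of $x_*$ such that: (i) for all $x,y\in U$, $\|f(x)-f(y)\|_2\le 2\|\mathrm{D}f(x_* )\|_2\|x-y\|_2$ and $\|f(g(x))-f(g(y))\|_2\le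 2\|\mathrm{D}f(x_* )\circ \mathrm{D}g(x_* )\|_2\|x-y\|_2$; (ii) there are $L,L'>0$ with $\|f(x)-\mathrm{D}f(x_* )(x-x_* )\|_2\le\frac L2\|x-x_*\|_2^2$ and $\|g(x)-x_*-\mathrm{D}g(x_* )(x-x_* )\|_2\le\frac{L'}2\|x-x_*\|_2^2$ for $x\in U$; (iii) $U$ is a tubular neighbourhood of $\Sigma\cap U$ on which the nearest-point projection $P_\Sigma(x)=\arg\min_{y\in\Sigma}\|x-y\|_2$ is well defined and smooth with values in $\Sigma\cap U$, and, with $P_{T_{x_*}\Sigma}$ the orthogonal projector onto the tangent space $T_{x_*}\Sigma$, there is $M>0$ with $\|P_\Sigma(x)-(x_*+P_{T_{x_*}\Sigma}(x-x_* ))\|_2\le\frac M2\|x-x_*\|_2^2$ for all $x\in U$. Notation: for $\ell\in\{0,\dots,m_k\}$, $\mathcal{A}^{(k)}_\ell=\{\sum_{i=0}^{\ell}c_i r^{(k-m_k+i)}:\sum_{i=0}^\ell c_i=1\}$ is the affine span of $r^{(k-m_k)},\dots,r^{(k-m_k+\ell)}$, and for $\ell\in\{1,\dots,m_k\}$, $d^{(k)}_\ell=\mathrm{dist}_2(r^{(k-m_k+\ell)},\mathcal{A}^{(k)}_{\ell-1})$. *)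

(* Defs.v *)
From Stdlib Require Import Reals ClassicalEpsilon.
From mathcomp Require Import all_boot.
Set Implicit Arguments. Unset Strict Implicit. Unset Printing Implicit Defensive.
Open Scope R_scope.

Definition Vec (n : nat) := 'I_n -> R.
Definition vzero {n} : Vec n := fun _ => 0.
Definition vadd {n} (u v : Vec n) : Vec n := fun i => u i + v i.
Definition vsub {n} (u v : Vec n) : Vec n := fun i => u i - v i.
Definition vscale {n} (a : R) (u : Vec n) : Vec n := fun i => a * u i.
Definition basis {n} (i : 'I_n) : Vec n := fun j => if j == i then 1 else 0.

Definition norm2 {n} (v : Vec n) : R := sqrt (\big[Rplus/0]_(i < n) (v i * v i)).

(** Matrices ('I_p -> 'I_n -> R represents a linear map R^n -> R^p) *)
Definition Mat (p n : nat) := 'I_p -> 'I_n -> R.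
Definition mapply {p n} (A : Mat p n) (v : Vec n) : Vec p :=
  fun i => \big[Rplus/0]_(j < n) (A i j * v j).
Definition mmul {p n q} (A : Mat p n) (B : Mat n q) : Mat p q :=
  fun i l => \big[Rplus/0]_(j < n) (A i j * B j l).
Definition frob {p n} (A : Mat p n) : R :=
  sqrt (\big[Rplus/0]_(i < p) \big[Rplus/0]_(j < n) (A i j * A i j)).

Definition lincomb {q} (m k : nat) (c : 'I_m.+1 -> R) (v : nat -> Vec q) : Vec q :=
  fun j => \big[Rplus/0]_(i < m.+1) (c i * v (k - m + i)%nat j).

Definition affspan {q} (v : nat -> Vec q) (k m l : nat) : Vec q -> Prop :=
  fun y => exists c : nat -> R,
    \big[Rplus/0]_(0 <= i < l.+1) c i = 1 /\
    y = (fun j => \big[Rplus/0]_(0 <= i < l.+1) (c i * v (k - m + i)%nat j)).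

Definition aff_indep {q} (v : nat -> Vec q) (k m : nat) : Prop :=
  forall c : 'I_m.+1 -> R,
    \big[Rplus/0]_(i < m.+1) c i = 0 ->
    lincomb k c v = vzero ->
    forall i, c i = 0.

Definition is_inf (E : R -> Prop) (d : R) : Prop :=
  (forall a, E a -> d <= a) /\ (forall d', (forall a, E a -> d' <= a) -> d' <= d).
Definition dist2 {q} (y : Vec q) (S : Vec q -> Prop) : R :=
  epsilon (inhabits 0) (is_inf (fun a => exists z, S z /\ a = norm2 (vsub y z))).

Definition is_open {n} (W : Vec n -> Prop) : Prop :=
  forall x, W x -> exists e, 0 < e /\ forall y, norm2 (vsub y x) < e -> W y.
Definition continuous_on {n} (W : Vec n -> Prop) (h : Vec n -> R) : Prop :=
  forall x, W x -> forall e, 0 < e -> exists d, 0 < d /\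
    forall y, W y -> norm2 (vsub y x) < d -> Rabs (h y - h x) < e.

Definition partial_lim {n} (h : Vec n -> R) (i : 'I_n) (x : Vec n) (l : R) : Prop :=
  derivable_pt_lim (fun s => h (vadd x (vscale s (basis i)))) 0 l.
Definition partial {n} (h : Vec n -> R) (i : 'I_n) (x : Vec n) : R :=
  epsilon (inhabits 0) (partial_lim h i x).

Fixpoint Ck (k : nat) {n} (W : Vec n -> Prop) (h : Vec n -> R) {struct k} : Prop :=
  continuous_on W h /\
  match k with
  | O => True
  | S k' => forall i, (forall x, W x -> exists l, partial_lim h i x l) /\
                      Ck k' W (partial h i)
  end.
Definition CkV (k : nat) {n p} (W : Vec n -> Prop) (F : Vec n -> Vec p) : Prop :=
  forall j, Ck k W (fun x => F x j).
Definition smooth_on {n p} (W : Vec n -> Prop) (F : Vec n -> Vec p) : Prop :=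
  forall k, CkV k W F.

Definition jac {n p} (F : Vec n -> Vec p) (x : Vec n) : Mat p n :=
  fun j i => partial (fun y => F y j) i x.

(** Smooth (embedded) submanifold of R^n: locally the zero set of a smooth
    submersion. *)
Definition submanifold {n} (S : Vec n -> Prop) : Prop :=
  forall y, S y -> exists (W : Vec n -> Prop) (q : nat) (phi : Vec n -> Vec q),
    is_open W /\ W y /\ smooth_on W phi /\
    (forall z, W z -> (S z <-> forall j, phi z j = 0)) /\
    (forall z, W z -> S z -> forall w : Vec q, exists v : Vec n, mapply (jac phi z) v = w).

Definition tangent {n} (S : Vec n -> Prop) (x : Vec n) (v : Vec n) : Prop :=
  exists (gam : R -> Vec n) (e : R), 0 < e /\
    (forall s, Rabs s < e -> S (gam s)) /\ gam 0 = x /\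
    forall i, derivable_pt_lim (fun s => gam s i) 0 (v i).

Definition orth_projector_onto {n} (P : Mat n n) (T : Vec n -> Prop) : Prop :=
  (forall i j, P i j = P j i) /\ mmul P P = P /\
  forall v, T v <-> exists w, mapply P w = v.

Definition nearest {n} (S : Vec n -> Prop) (x y : Vec n) : Prop :=
  S y /\ forall z, S z -> norm2 (vsub x y) <= norm2 (vsub x z).
Definition proj_set {n} (S : Vec n -> Prop) (x : Vec n) : Vec n :=
  epsilon (inhabits x) (nearest S x).

(* Main.v *)
Require Import Defs.
From Stdlib Require Import Reals ClassicalEpsilon FunctionalExtensionality Lra.
From HB Require Import structures.
From mathcomp Require Import all_boot.
Set Warnings "-notation-overridden -redundant-canonical-projection".
Open Scope R_scope.

Lemma Rplus_assoc' : associative Rplus. Proof. move=> *; rewrite Rplus_assoc //. Qed.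
HB.instance Definition _ := Monoid.isComLaw.Build R 0 Rplus Rplus_assoc' Rplus_comm Rplus_0_l.
Lemma Rmult_assoc' : associative Rmult. Proof. move=> *; rewrite Rmult_assoc //. Qed.
HB.instance Definition _ := Monoid.isComLaw.Build R 1 Rmult Rmult_assoc' Rmult_comm Rmult_1_l.
HB.instance Definition _ := Monoid.isMulLaw.Build R 0 Rmult Rmult_0_l Rmult_0_r.
HB.instance Definition _ := Monoid.isAddLaw.Build R Rmult Rplus Rmult_plus_distr_r Rmult_plus_distr_l.

Lemma Rabs_m1 : Rabs (-1) = 1.
Proof. rewrite Rabs_left; lra. Qed.

Section Vecs.
Context {p : nat}.
Implicit Types u v w : Vec p.

Definition dot u v := \big[Rplus/0]_(j < p) (u j * v j).

Lemma dot_sym u v : dot u v = dot v u.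
Proof. rewrite /dot; apply: eq_bigr => j _; ring. Qed.

Lemma big_ge0 (I : Type) (r : seq I) (P : pred I) (F : I -> R) :
  (forall i, P i -> 0 <= F i) -> 0 <= \big[Rplus/0]_(i <- r | P i) F i.
Proof. move=> H; apply: (big_ind (fun x => 0 <= x)) => //; [lra | move=> *; lra]. Qed.

Lemma dot_ge0 v : 0 <= dot v v.
Proof. apply: big_ge0 => j _; apply: Rle_0_sqr. Qed.

Lemma norm2_ge0 v : 0 <= norm2 v.
Proof. apply: sqrt_pos. Qed.

Lemma norm2_sq v : norm2 v * norm2 v = dot v v.
Proof. rewrite /norm2 sqrt_sqrt //; apply: dot_ge0. Qed.

Lemma dot_addl u w v : dot (vadd u w) v = dot u v + dot w v.
Proof. rewrite /dot -big_split; apply: eq_bigr => j _; rewrite /vadd /=; ring. Qed.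
Lemma dot_subl u w v : dot (vsub u w) v = dot u v - dot w v.
Proof.
rewrite /dot /Rminus; have ->: (- \big[Rplus/0]_(j < p) (w j * v j)) = \big[Rplus/0]_(j < p) (-1 * (w j * v j)).
  by rewrite -big_distrr /=; ring.
rewrite -big_split; apply: eq_bigr => j _; rewrite /vsub /=; ring. Qed.
Lemma dot_scalel a u v : dot (vscale a u) v = a * dot u v.
Proof. rewrite /dot big_distrr; apply: eq_bigr => j _; rewrite /vscale /=; ring. Qed.
Lemma dot_addr u w v : dot v (vadd u w) = dot v u + dot v w.
Proof. by rewrite dot_sym dot_addl !(dot_sym v). Qed.
Lemma dot_subr u w v : dot v (vsub u w) = dot v u - dot v w.
Proof. by rewrite dot_sym dot_subl !(dot_sym v). Qed.
Lemma dot_scaler a u v : dot v (vscale a u) = a * dot v u.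
Proof. by rewrite dot_sym dot_scalel dot_sym. Qed.
Lemma dot0l v : dot vzero v = 0.
Proof. rewrite /dot big1 // => j _; rewrite /vzero /=; ring. Qed.
Lemma dot0r v : dot v vzero = 0.
Proof. by rewrite dot_sym dot0l. Qed.

Lemma dot_eq0 v : dot v v = 0 -> v = vzero.
Proof.
move=> H; apply: functional_extensionality => j; rewrite /vzero.
have: v j * v j <= dot v v.
  rewrite /dot (bigD1 j) //=.
  set S := \big[Rplus/0]_(i < p | _) _.
  have : 0 <= S by apply: big_ge0 => i _; apply: Rle_0_sqr.
  lra.
rewrite H => h; have := Rle_0_sqr (v j); rewrite /Rsqr => h'.
nra.
Qed.

Lemma norm2_eq0 v : norm2 v = 0 -> v = vzero.
Proof. move=> H; apply: dot_eq0; rewrite -norm2_sq H; ring. Qed.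

Lemma norm2_zero : norm2 (@vzero p) = 0.
Proof. rewrite /norm2 -/(dot vzero vzero) dot0l sqrt_0 //. Qed.

Lemma CS u v : Rabs (dot u v) <= norm2 u * norm2 v.
Proof.
have [H|H] := Req_dec (dot u u) 0.
  rewrite (dot_eq0 u H) dot0l Rabs_R0; apply: Rmult_le_pos; apply: norm2_ge0.
set a := dot u u; set b := dot u v; set c := dot v v.
have ha : 0 < a.
  have h0 := dot_ge0 u; rewrite -/a in h0; case: (Rle_lt_or_eq_dec _ _ h0) => // h1.
  by exfalso; apply: H; rewrite h1.
have h := dot_ge0 (vsub (vscale a v) (vscale b u)).
rewrite !(dot_subl, dot_subr, dot_scalel, dot_scaler) -/a -/c (dot_sym v u) -/b in h.
have hb : b * b <= a * c.
  have h2: 0 <= a * (a * c - b * b) by nra.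
  case: (Rle_lt_dec (b*b) (a*c)) => // h3.
  have : 0 < a * (b * b - a * c) by apply: Rmult_lt_0_compat; lra.
  lra.
apply: Rsqr_incr_0_var; last by apply: Rmult_le_pos; apply: norm2_ge0.
rewrite -Rsqr_abs /Rsqr; have ->: norm2 u * norm2 v * (norm2 u * norm2 v) = (norm2 u * norm2 u) * (norm2 v * norm2 v) by ring.
by rewrite !norm2_sq -/a -/c.
Qed.

Lemma norm2_add u v : norm2 (vadd u v) <= norm2 u + norm2 v.
Proof.
apply: Rsqr_incr_0_var; last by have := norm2_ge0 u; have := norm2_ge0 v; lra.
rewrite /Rsqr norm2_sq !(dot_addl, dot_addr) (dot_sym v u).
have := CS u v; have := Rle_abs (dot u v); rewrite -!norm2_sq; nra.
Qed.

Lemma norm2_scale a v : norm2 (vscale a v) = Rabs a * norm2 v.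
Proof.
apply: Rsqr_inj; [apply: norm2_ge0 | apply: Rmult_le_pos; [apply: Rabs_pos|apply: norm2_ge0]|].
rewrite /Rsqr norm2_sq dot_scalel dot_scaler.
have ->: Rabs a * norm2 v * (Rabs a * norm2 v) = (Rabs a * Rabs a) * (norm2 v * norm2 v) by ring.
rewrite norm2_sq -Rabs_mult Rabs_right; [ring|]; apply: Rle_ge; apply: Rle_0_sqr.
Qed.

Lemma vsub_vadd u v : vsub u v = vadd u (vscale (-1) v).
Proof. apply: functional_extensionality => j; rewrite /vsub /vadd /vscale; ring. Qed.

Lemma norm2_sub u v : norm2 (vsub u v) <= norm2 u + norm2 v.
Proof. rewrite vsub_vadd; have := norm2_add u (vscale (-1) v); rewrite norm2_scale Rabs_m1; lra. Qed.

Lemma norm2_subC u v : norm2 (vsub u v) = norm2 (vsub v u).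
Proof.
have ->: vsub u v = vscale (-1) (vsub v u) by apply: functional_extensionality => j; rewrite /vsub /vscale; ring.
by rewrite norm2_scale Rabs_m1; ring.
Qed.

Lemma norm2_tri u v w : norm2 (vsub u w) <= norm2 (vsub u v) + norm2 (vsub v w).
Proof.
have ->: vsub u w = vadd (vsub u v) (vsub v w) by apply: functional_extensionality => j; rewrite /vsub /vadd; ring.
apply: norm2_add.
Qed.

Lemma norm2_bigsum (I : Type) (r : seq I) (P : pred I) (F : I -> Vec p) :
  norm2 (fun j => \big[Rplus/0]_(i <- r | P i) F i j) <= \big[Rplus/0]_(i <- r | P i) norm2 (F i).
Proof.
elim: r => [|a r IH].
  have ->: (fun j => \big[Rplus/0]_(i <- [::] | P i) F i j) = vzero.
    by apply: functional_extensionality => j; rewrite big_nil.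
  by rewrite big_nil norm2_zero; lra.
rewrite big_cons; case Pa: (P a).
  have ->: (fun j => \big[Rplus/0]_(i <- a :: r | P i) F i j) =
     vadd (F a) (fun j => \big[Rplus/0]_(i <- r | P i) F i j).
    by apply: functional_extensionality => j; rewrite big_cons Pa.
  have := norm2_add (F a) (fun j => \big[Rplus/0]_(i <- r | P i) F i j); rewrite /=; lra.
have ->: (fun j => \big[Rplus/0]_(i <- a :: r | P i) F i j) =
     (fun j => \big[Rplus/0]_(i <- r | P i) F i j).
  by apply: functional_extensionality => j; rewrite big_cons Pa.
by [].
Qed.

End Vecs.

Lemma dist2_eq q (S : Vec q -> Prop) y d0 :
  is_inf (fun a => exists z, S z /\ a = norm2 (vsub y z)) d0 -> dist2 y S = d0.
Proof.
move=> H; rewrite /dist2.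
have h := epsilon_spec (inhabits 0) (is_inf (fun a => exists z, S z /\ a = norm2 (vsub y z))) (ex_intro _ d0 H).
move: h; set e := epsilon _ _ => [[h1 h2]].
case: H => [H1 H2]; apply: Rle_antisym; [apply: H2 h1|apply: h2 H1].
Qed.

Section GS.
Context {p : nat}. Variable (s : nat -> Vec p).

Definition lc (l : nat) (c : nat -> R) : Vec p :=
  fun j => \big[Rplus/0]_(0 <= i < l.+1) (c i * s i j).
Definition Aff (l : nat) : Vec p -> Prop :=
  fun y => exists c : nat -> R, \big[Rplus/0]_(0 <= i < l.+1) c i = 1 /\ y = lc l c.
Definition csum l (c : nat -> R) := \big[Rplus/0]_(0 <= i < l.+1) c i.

Lemma lc_recr l c : lc l.+1 c = vadd (lc l c) (vscale (c l.+1) (s l.+1)).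
Proof. apply: functional_extensionality => j; rewrite /lc big_nat_recr //=. Qed.
Lemma csum_recr l c : csum l.+1 c = csum l c + c l.+1.
Proof. rewrite /csum big_nat_recr //=. Qed.
Lemma lc0 c : lc 0 c = vscale (c 0%N) (s 0%N).
Proof. apply: functional_extensionality => j; rewrite /lc big_nat1 //=. Qed.
Lemma csum0 c : csum 0 c = c 0%N.
Proof. rewrite /csum big_nat1 //=. Qed.
Lemma lc_lin l a b c d : lc l (fun i => a * c i + b * d i) = vadd (vscale a (lc l c)) (vscale b (lc l d)).
Proof.
apply: functional_extensionality => j; rewrite /lc /vadd /vscale !big_distrr -big_split.
apply: eq_bigr => i _ /=; ring.
Qed.
Lemma csum_lin l a b c d : csum l (fun i => a * c i + b * d i) = a * csum l c + b * csum l d.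
Proof. rewrite /csum !big_distrr -big_split; apply: eq_bigr => i _ /=; ring. Qed.
Lemma lc_ext l c d : (forall i, (i <= l)%N -> c i = d i) -> lc l c = lc l d.
Proof.
move=> H; apply: functional_extensionality => j; rewrite /lc; apply: eq_big_nat => i /andP [_ hi].
by rewrite H.
Qed.
Lemma csum_ext l c d : (forall i, (i <= l)%N -> c i = d i) -> csum l c = csum l d.
Proof. move=> H; rewrite /csum; apply: eq_big_nat => i /andP [_ hi]; by rewrite H. Qed.

Lemma lc_widen l k c : (forall i, (l < i)%N -> c i = 0) -> lc (l + k) c = lc l c.
Proof.
move=> H; elim: k => [|k IH]; first by rewrite addn0.
rewrite addnS lc_recr IH H; last by rewrite ltnS leq_addr.
by apply: functional_extensionality => j; rewrite /vadd /vscale /=; ring.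
Qed.
Lemma csum_widen l k c : (forall i, (l < i)%N -> c i = 0) -> csum (l + k) c = csum l c.
Proof.
move=> H; elim: k => [|k IH]; first by rewrite addn0.
rewrite addnS csum_recr IH H; last by rewrite ltnS leq_addr.
ring.
Qed.

Fixpoint coef (l : nat) (q : Vec p) {struct l} : nat -> R :=
  match l with
  | O => fun i => if i == 0%N then 1 else 0
  | S l' => let d := coef l' (s l) in
            let e := vsub (s l) (lc l' d) in
            let sg := dot (vsub q (lc l' (coef l' q))) e / dot e e in
            fun i => coef l' q i + sg * ((if i == l then 1 else 0) - d i)
  end.

Definition P l q := lc l (coef l q).
Definition E l := vsub (s l.+1) (P l (s l.+1)).
Definition SG l q := dot (vsub q (P l q)) (E l) / dot (E l) (E l).

Lemma coefS l q i : coef l.+1 q i = coef l q i + SG l q * ((if i == l.+1 then 1 else 0) - coef l (s l.+1) i).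
Proof. by []. Qed.

Lemma coef_out l q i : (l < i)%N -> coef l q i = 0.
Proof.
elim: l q i => [|l IH] q i hi /=.
  by case: i hi.
rewrite -/(coef l.+1 q i) coefS !IH; try by apply: ltnW.
have -> : (i == l.+1) = false by apply/negbTE; rewrite neq_ltn hi orbT.
ring.
Qed.

Lemma csum_coef l q : csum l (coef l q) = 1.
Proof.
elim: l q => [|l IH] q; first by rewrite csum0.
rewrite csum_recr coefS coef_out // eqxx.
rewrite (@csum_ext l _ (fun i => 1 * coef l q i + (- SG l q) * coef l (s l.+1) i)).
  rewrite csum_lin !IH coef_out //; ring.
move=> i hi; rewrite coefS.
have -> : (i == l.+1) = false by apply/negbTE; rewrite neq_ltn ltnS hi.
ring.
Qed.

Lemma P_S l q : P l.+1 q = vadd (P l q) (vscale (SG l q) (E l)).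
Proof.
rewrite /P lc_recr (@lc_ext l _ (fun i => 1 * coef l q i + (- SG l q) * coef l (s l.+1) i)).
  rewrite lc_lin coefS eqxx !coef_out //.
  by apply: functional_extensionality => j; rewrite /vadd /vscale /E /vsub /P /=; ring.
move=> i hi; rewrite coefS.
have -> : (i == l.+1) = false by apply/negbTE; rewrite neq_ltn ltnS hi.
ring.
Qed.

Definition orth l q := forall c, csum l c = 0 -> dot (vsub q (P l q)) (lc l c) = 0.

Lemma orth0 q : orth 0 q.
Proof. move=> c; rewrite csum0 lc0 dot_scaler => ->; ring. Qed.

Lemma orth_step l : (forall q, orth l q) -> dot (E l) (E l) <> 0 -> forall q, orth l.+1 q.
Proof.
move=> IH hE q c hc.
set d := coef l (s l.+1).
set c' := fun i => 1 * c i + c l.+1 * d i.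
have hlc : lc l.+1 c = vadd (lc l c') (vscale (c l.+1) (E l)).
  rewrite lc_recr /c' lc_lin.
  by apply: functional_extensionality => j; rewrite /vadd /vscale /E /vsub /P /d /=; ring.
have hc' : csum l c' = 0.
  rewrite /c' csum_lin /d csum_coef; rewrite csum_recr in hc; lra.
have h1 := IH q c' hc'.
have h2 := IH (s l.+1) c' hc'.
rewrite -/(P l (s l.+1)) -/(E l) in h2.
rewrite hlc P_S.
have -> : vsub q (vadd (P l q) (vscale (SG l q) (E l))) = vsub (vsub q (P l q)) (vscale (SG l q) (E l)).
  by apply: functional_extensionality => j; rewrite /vadd /vscale /vsub /=; ring.
rewrite -/(E l) in h2 *; move: h1 h2; set X := vsub q (P l q); set e := E l; set Y := lc l c' => h1 h2.
rewrite dot_subl !dot_addr !dot_scalel !dot_scaler h1 h2 /SG -/X -/e.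
field; exact hE.
Qed.

Lemma pyth l q c : orth l q -> csum l c = 1 ->
  dot (vsub q (lc l c)) (vsub q (lc l c)) =
  dot (vsub q (P l q)) (vsub q (P l q)) + dot (vsub (P l q) (lc l c)) (vsub (P l q) (lc l c)).
Proof.
move=> ho hc.
have hw : vsub (P l q) (lc l c) = lc l (fun i => 1 * coef l q i + (-1) * c i).
  rewrite lc_lin /P; apply: functional_extensionality => j; rewrite /vadd /vscale /vsub /=; ring.
have hw0 : csum l (fun i => 1 * coef l q i + (-1) * c i) = 0 by rewrite csum_lin csum_coef hc; ring.
have -> : vsub q (lc l c) = vadd (vsub q (P l q)) (vsub (P l q) (lc l c)).
  by apply: functional_extensionality => j; rewrite /vadd /vsub /=; ring.
have h0 : dot (vsub q (P l q)) (vsub (P l q) (lc l c)) = 0 by rewrite hw ho.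
move: h0; set X := vsub q (P l q); set W := vsub (P l q) (lc l c) => h0.
rewrite (dot_addl X W) (dot_addr X W X) (dot_addr X W W) (dot_sym W X) h0; ring.
Qed.

Lemma nearest_le l q y : orth l q -> Aff l y -> norm2 (vsub q (P l q)) <= norm2 (vsub q y).
Proof.
move=> ho [c [hc ->]]; rewrite /norm2; apply: sqrt_le_1_alt.
rewrite -/(dot _ _) -/(dot (vsub q (lc l c)) _) pyth //.
have := dot_ge0 (vsub (P l q) (lc l c)); lra.
Qed.

Lemma P_aff l q : Aff l (P l q).
Proof. by exists (coef l q); split => //; apply: csum_coef. Qed.

Lemma dist2_is l q : orth l q -> dist2 q (Aff l) = norm2 (vsub q (P l q)).
Proof.
move=> ho; apply: dist2_eq; split.
  by move=> a [z [hz ->]]; apply: nearest_le.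
by move=> d' H; apply: H; exists (P l q); split => //; apply: P_aff.
Qed.

End GS.

Lemma big_Rle (I : Type) (r : seq I) (P : pred I) (F G : I -> R) :
  (forall i, P i -> F i <= G i) ->
  \big[Rplus/0]_(i <- r | P i) F i <= \big[Rplus/0]_(i <- r | P i) G i.
Proof.
move=> H; apply: (big_ind2 (fun x y => x <= y)) => //; first lra.
by move=> *; apply: Rplus_le_compat.
Qed.

Lemma sum_ord1 n : \big[Rplus/0]_(i < n) 1 = INR n.
Proof.
elim: n => [|n IH]; first by rewrite big_ord0.
by rewrite big_ord_recr IH S_INR.
Qed.

Section Bessel.
Context {p : nat}.

Lemma dot_basis_l (j0 : 'I_p) (v : Vec p) : dot (basis j0) v = v j0.
Proof.
rewrite /dot (bigD1 j0) //= big1 /basis ?eqxx => [|j hj]; first ring.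
by rewrite (negbTE hj); ring.
Qed.

Lemma dot_vsum_l n (F : 'I_n -> Vec p) (v : Vec p) :
  dot (fun j => \big[Rplus/0]_(i < n) F i j) v = \big[Rplus/0]_(i < n) dot (F i) v.
Proof.
rewrite /dot; under eq_bigr do rewrite big_distrl.
by rewrite exchange_big.
Qed.

Lemma dot_vsum_r n (F : 'I_n -> Vec p) (v : Vec p) :
  dot v (fun j => \big[Rplus/0]_(i < n) F i j) = \big[Rplus/0]_(i < n) dot v (F i).
Proof.
rewrite dot_sym dot_vsum_l; apply: eq_bigr => i _; apply: dot_sym.
Qed.

Lemma bessel n (u : nat -> Vec p) :
  (forall i j, (i < n)%N -> (j < n)%N -> dot (u i) (u j) = if i == j then 1 else 0) ->
  (n <= p)%N.
Proof.
move=> Hu.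
have collapse : forall (a : 'I_n -> R) (i : 'I_n),
   \big[Rplus/0]_(k < n) (a k * dot (u i) (u k)) = a i.
  move=> a i; rewrite (bigD1 i) //= big1 => [|k hk].
    by rewrite Hu // eqxx; ring.
  rewrite Hu //; have -> : (nat_of_ord i == nat_of_ord k) = false.
    by apply/negbTE; rewrite eq_sym; exact hk.
  ring.
have step1 : forall j0 : 'I_p, \big[Rplus/0]_(i < n) (u i j0 * u i j0) <= 1.
  move=> j0.
  set U := fun j => \big[Rplus/0]_(i < n) vscale (u i j0) (u i) j.
  have h := dot_ge0 (vsub (basis j0) U).
  rewrite (dot_subl (basis j0) U) (dot_subr (basis j0) U (basis j0)) (dot_subr (basis j0) U U) in h.
  rewrite !dot_basis_l (dot_sym U (basis j0)) dot_basis_l in h.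
  have hbb : basis j0 j0 = 1 by rewrite /basis eqxx.
  have hUU : dot U U = \big[Rplus/0]_(i < n) (u i j0 * u i j0).
    rewrite /U dot_vsum_l; apply: eq_bigr => i _; rewrite dot_scalel dot_vsum_r.
    under eq_bigr do rewrite dot_scaler.
    by rewrite collapse.
  have hU : U j0 = \big[Rplus/0]_(i < n) (u i j0 * u i j0) by [].
  lra.
have h2 : \big[Rplus/0]_(j0 < p) \big[Rplus/0]_(i < n) (u i j0 * u i j0) <= INR p.
  by rewrite -sum_ord1; apply: big_Rle => j0 _; apply: step1.
rewrite exchange_big /= in h2.
have h3 : \big[Rplus/0]_(i < n) \big[Rplus/0]_(j0 < p) (u i j0 * u i j0) = INR n.
  rewrite -sum_ord1; apply: eq_bigr => i _.
  by rewrite -/(dot (u i) (u i)) Hu // eqxx.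
apply/leP; apply: INR_le; rewrite -h3; exact h2.
Qed.

End Bessel.

Lemma bigmax_ge (I : eqType) (r : seq I) (F : I -> R) j :
  j \in r -> F j <= \big[Rmax/0]_(i <- r) F i.
Proof.
elim: r => // a r IH; rewrite in_cons big_cons => /orP [/eqP -> | h].
  by apply: Rmax_l.
by apply: Rle_trans (IH h) _; apply: Rmax_r.
Qed.

Lemma bigmax_ge0 (I : Type) (r : seq I) (F : I -> R) : 0 <= \big[Rmax/0]_(i <- r) F i.
Proof.
elim: r => [|a r IH]; first by rewrite big_nil; lra.
by rewrite big_cons; apply: Rle_trans IH _; apply: Rmax_r.
Qed.

Lemma norm2_pos {p} (v : Vec p) : v <> vzero -> 0 < norm2 v.
Proof.
move=> H; case: (Rle_lt_or_eq_dec _ _ (norm2_ge0 v)) => // h.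
by exfalso; apply: H; apply: norm2_eq0.
Qed.

Fixpoint Bd (t : R) (l : nat) : R :=
  match l with O => 1 | S l' => Bd t l' + (1 + 2 / t) * (1 + Bd t l') end.

Lemma Bd_ge1 t l : 0 < t -> 1 <= Bd t l.
Proof.
move=> ht; elim: l => [|l IH] /=; first lra.
have : 0 <= 2 / t by apply: Rlt_le; apply: Rdiv_lt_0_compat; lra.
nra.
Qed.

Section LA.
Context {p : nat}.
Variables (s : nat -> Vec p) (m : nat) (t : R).
Hypothesis Ht : 0 < t.
Hypothesis Hnz : forall i, (i <= m)%N -> s i <> vzero.
Hypothesis Hd : forall i, (1 <= i <= m)%N ->
  dist2 (s i) (Aff s i.-1) >= t * \big[Rmax/0]_(i <= j < m.+1) norm2 (s j).

Lemma Hd' i j : (1 <= i <= m)%N -> (i <= j <= m)%N -> t * norm2 (s j) <= dist2 (s i) (Aff s i.-1).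
Proof.
move=> hi /andP [hij hjm].
have h1 := Hd _ hi.
have h2 : norm2 (s j) <= \big[Rmax/0]_(i <= j < m.+1) norm2 (s j).
  by apply: (@bigmax_ge _ _ (fun j => norm2 (s j))); rewrite mem_index_iota hij ltnS.
have := Rmult_le_compat_l t _ _ (Rlt_le _ _ Ht) h2; lra.
Qed.

Lemma orth_le l : (l <= m)%N -> forall q, orth s l q.
Proof.
elim: l => [|l IH] hl q; first by apply: orth0.
have IH' := IH (ltnW hl).
apply: orth_step => //.
have hd := dist2_is _ _ _ (IH' (s l.+1)).
have h := @Hd' l.+1 l.+1; rewrite /= hd in h.
have hpos := norm2_pos _ (Hnz _ hl).
have hE : 0 < norm2 (E s l).
  have := h (ltac:(by rewrite hl)) (ltac:(by rewrite leqnn hl)).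
  rewrite /E; nra.
rewrite -norm2_sq; nra.
Qed.

Lemma dE i : (i < m)%N -> dist2 (s i.+1) (Aff s i) = norm2 (E s i) /\ 0 < norm2 (E s i).
Proof.
move=> hi; have hd := dist2_is _ _ _ (orth_le _ (ltnW hi) (s i.+1)).
split; first exact hd.
have h := @Hd' i.+1 i.+1 (ltac:(by rewrite hi)) (ltac:(by rewrite leqnn hi)).
rewrite /= hd in h; have := norm2_pos _ (Hnz _ hi); rewrite /E; nra.
Qed.

Lemma SG_bound l q : (l < m)%N ->
  t * norm2 q <= dist2 (s l.+1) (Aff s l) ->
  Rabs (SG s l q) <= 1 + 2 / t.
Proof.
move=> hl hq.
have [hd hN] := dE _ hl.
rewrite hd in hq.
have hs := @Hd' l.+1 l.+1 (ltac:(by rewrite hl)) (ltac:(by rewrite leqnn hl)).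
rewrite /= hd in hs.
set N := norm2 (E s l) in hq hs hN.
have ho := orth_le _ (ltnW hl) (s l.+1).
have hX : dot (vsub q (P s l q)) (E s l) = dot (vsub q (s l.+1)) (E s l) + dot (E s l) (E s l).
  have hw : vsub (P s l (s l.+1)) (P s l q) = lc s l (fun i => 1 * coef s l (s l.+1) i + (-1) * coef s l q i).
    by rewrite lc_lin /P; apply: functional_extensionality => j; rewrite /vadd /vscale /vsub /=; ring.
  have hw0 : csum l (fun i => 1 * coef s l (s l.+1) i + (-1) * coef s l q i) = 0.
    by rewrite csum_lin !csum_coef; ring.
  have h0 := ho _ hw0; rewrite -hw -/(E s l) in h0.
  have -> : vsub q (P s l q) = vadd (vadd (vsub q (s l.+1)) (E s l)) (vsub (P s l (s l.+1)) (P s l q)).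
    by apply: functional_extensionality => j; rewrite /E /P /vadd /vsub /=; ring.
  move: h0; set A := vsub q (s l.+1); set e := E s l; set W := vsub _ _ => h0.
  by rewrite (dot_addl (vadd A e) W) (dot_addl A e) (dot_sym W e) h0; ring.
rewrite /SG hX.
have hee : dot (E s l) (E s l) = N * N by rewrite -norm2_sq.
rewrite hee.
have hcs := CS (vsub q (s l.+1)) (E s l).
have htri := norm2_sub q (s l.+1).
rewrite -/N in hcs.
set X := dot (vsub q (s l.+1)) (E s l) in hcs *.
have -> : (X + N * N) / (N * N) = X / (N * N) + 1 by field; lra.
apply: Rle_trans (Rabs_triang _ _) _; rewrite Rabs_R1.
suff : Rabs (X / (N * N)) <= 2 / t by lra.
have -> : Rabs (X / (N * N)) = Rabs X / (N * N).
  rewrite /Rdiv Rabs_mult Rabs_inv (Rabs_right (N * N)) //; apply: Rle_ge; nra.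
have hq0 := norm2_ge0 q; have hs0 := norm2_ge0 (s l.+1).
have hX1 : Rabs X <= (norm2 q + norm2 (s l.+1)) * N.
  apply: Rle_trans hcs _; apply: Rmult_le_compat_r; lra.
have hX2 : t * Rabs X <= 2 * (N * N) by nra.
have -> : Rabs X / (N * N) = (t * Rabs X) / (N * N) / t by field; lra.
have -> : 2 / t = (2 * (N * N)) / (N * N) / t by field; lra.
apply: Rmult_le_compat_r; first by apply: Rlt_le; apply: Rinv_0_lt_compat.
apply: Rmult_le_compat_r; last exact hX2.
apply: Rlt_le; apply: Rinv_0_lt_compat; nra.
Qed.

Lemma coef_bound l : (l <= m)%N -> forall q,
  (forall i, (1 <= i <= l)%N -> t * norm2 q <= dist2 (s i) (Aff s i.-1)) ->
  forall i, Rabs (coef s l q i) <= Bd t l.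
Proof.
elim: l => [|l IH] hl q hq i.
  rewrite /=; case: (i == 0%N); rewrite ?Rabs_R1 ?Rabs_R0; lra.
rewrite coefS /=.
have h1 : Rabs (coef s l q i) <= Bd t l.
  by apply: (IH (ltnW hl) q) => j /andP [hj1 hj2]; apply: hq; rewrite hj1 /= ltnW.
have h2 : Rabs (coef s l (s l.+1) i) <= Bd t l.
  apply: (IH (ltnW hl) (s l.+1)) => j /andP [hj1 hj2]; apply: Hd'; first by rewrite hj1 /= (leq_trans hj2 (ltnW hl)).
  by rewrite (leq_trans hj2 (leqnSn _)) hl.
have h3 := SG_bound _ _ hl (hq l.+1 (ltac:(by rewrite leqnn))).
have h4 : Rabs ((if i == l.+1 then 1 else 0) - coef s l (s l.+1) i) <= 1 + Bd t l.
  rewrite /Rminus; apply: Rle_trans (Rabs_triang _ _) _; rewrite Rabs_Ropp.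
  by case: (i == l.+1); rewrite ?Rabs_R1 ?Rabs_R0; lra.
apply: Rle_trans (Rabs_triang _ _) _; rewrite Rabs_mult.
have := Bd_ge1 t l Ht; have := Rabs_pos (SG s l q).
have := Rabs_pos ((if i == l.+1 then 1 else 0) - coef s l (s l.+1) i).
have : Rabs (SG s l q) * Rabs ((if i == l.+1 then 1 else 0) - coef s l (s l.+1) i) <= (1 + 2 / t) * (1 + Bd t l).
  apply: Rmult_le_compat => //; apply: Rabs_pos.
lra.
Qed.


Lemma indep l : (l <= m)%N -> forall c, csum l c = 0 -> lc s l c = vzero ->
  forall i, (i <= l)%N -> c i = 0.
Proof.
elim: l => [|l IH] hl c hc hlc i hi.
  by move: hi; rewrite leqn0 => /eqP ->; rewrite csum0 in hc.
rewrite csum_recr in hc; rewrite lc_recr in hlc.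
case: (Req_dec (c l.+1) 0) => hcl.
  have hlc' : lc s l c = vzero.
    rewrite -hlc hcl; apply: functional_extensionality => j; rewrite /vadd /vscale /=; ring.
  rewrite hcl in hc.
  move: hi; rewrite leq_eqVlt => /orP [/eqP -> // | hi].
  by apply: (IH (ltnW hl)) => //; lra.
exfalso.
have hA : Aff s l (s l.+1).
  exists (fun i => (- / c l.+1) * c i + 0 * c i); split.
    rewrite -/(csum l _) csum_lin.
    have -> : csum l c = - c l.+1 by lra.
    field; exact hcl.
  rewrite lc_lin; apply: functional_extensionality => j.
  have := f_equal (fun v => v j) hlc; rewrite /vadd /vscale /vzero /= => hj.
  transitivity (/ c l.+1 * (c l.+1 * s l.+1 j)); first by field; exact hcl.
  have -> : c l.+1 * s l.+1 j = - lc s l c j by lra.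
  ring.
have [_ hN] := dE _ hl.
have h := nearest_le _ _ _ _ (orth_le _ (ltnW hl) (s l.+1)) hA.
rewrite (_ : vsub (s l.+1) (s l.+1) = vzero) in h; last first.
  by apply: functional_extensionality => j; rewrite /vsub /vzero /=; ring.
rewrite norm2_zero -/(E s l) in h; lra.
Qed.

Lemma E_orth i j : (i < j)%N -> (j < m)%N -> dot (E s j) (E s i) = 0.
Proof.
move=> hij hjm.
set cE := fun k => 1 * (if k == i.+1 then 1 else 0) + (-1) * coef s i (s i.+1) k.
have hout : forall k, (i.+1 < k)%N -> cE k = 0.
  move=> k hk; rewrite /cE coef_out; last by apply: ltn_trans hk.
  have -> : (k == i.+1) = false by apply/negbTE; rewrite neq_ltn hk orbT.
  ring.
have hlcE : lc s i.+1 cE = E s i.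
  rewrite lc_recr /cE coef_out // eqxx.
  rewrite (@lc_ext _ s i _ (fun k => 0 * coef s i (s i.+1) k + (-1) * coef s i (s i.+1) k)).
    rewrite lc_lin; apply: functional_extensionality => k; rewrite /E /P /vadd /vscale /vsub /=; ring.
  move=> k hk; have -> : (k == i.+1) = false by apply/negbTE; rewrite neq_ltn ltnS hk.
  ring.
have hcE : csum i.+1 cE = 0.
  rewrite csum_recr /cE coef_out // eqxx.
  rewrite (@csum_ext i _ (fun k => 0 * coef s i (s i.+1) k + (-1) * coef s i (s i.+1) k)).
    rewrite csum_lin csum_coef; ring.
  move=> k hk; have -> : (k == i.+1) = false by apply/negbTE; rewrite neq_ltn ltnS hk.
  ring.
have hj : j = (i.+1 + (j - i.+1))%N by rewrite subnKC.
have h := orth_le _ (ltnW hjm) (s j.+1) cE.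
have hc' : csum j cE = 0 by rewrite hj csum_widen // hcE.
have hl' : lc s j cE = E s i by rewrite hj (lc_widen s i.+1 (j - i.+1) cE hout) hlcE.
by rewrite -hl'; apply: h.
Qed.

Lemma m_le_p : (m <= p)%N.
Proof.
apply: (@bessel _ m (fun i => vscale (/ norm2 (E s i)) (E s i))) => i j hi hj.
rewrite dot_scalel dot_scaler.
have [_ hNi] := dE _ hi; have [_ hNj] := dE _ hj.
case: (ltngtP i j) => hij.
- by rewrite (dot_sym (E s i)) E_orth //; ring.
- by rewrite E_orth //; ring.
- rewrite hij ?eqxx -norm2_sq; field; lra.
Qed.

End LA.



Lemma Bd_closed t l : 0 < t -> Bd t l + 1 = 2 * (2 + 2 / t) ^ l.
Proof.
move=> ht; elim: l => [|l IH]; first by simpl; ring.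
change (Bd t l + (1 + 2 / t) * (1 + Bd t l) + 1 = 2 * ((2 + 2 / t) * (2 + 2 / t) ^ l)).
have e : (2 + 2 / t) ^ l = (Bd t l + 1) / 2 by rewrite IH; field.
rewrite e; field; lra.
Qed.

Lemma Bd_bound t l : 0 < t -> Bd t l <= 2 * 4 ^ l * (1 + / t ^ l).
Proof.
move=> ht; have := Bd_closed t l ht.
have -> : 2 + 2 / t = 2 * (1 + / t) by rewrite /Rdiv; ring.
rewrite Rpow_mult_distr => h.
have h4 : (4 : R) ^ l = 2 ^ l * 2 ^ l by rewrite -Rpow_mult_distr; congr (_ ^ _); ring.
have hp2 : 0 < 2 ^ l by apply: pow_lt; lra.
have hti : 0 < / t ^ l by apply: Rinv_0_lt_compat; apply: pow_lt.
have key : (1 + / t) ^ l <= 2 ^ l * (1 + / t ^ l).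
  case: (Rle_lt_dec 1 t) => h1.
    have : (1 + / t) ^ l <= 2 ^ l.
      apply: pow_incr; split; first by have := Rinv_0_lt_compat t ht; lra.
      have : / t <= 1 by rewrite -Rinv_1; apply: Rinv_le_contravar; lra.
      lra.
    nra.
  have : (1 + / t) ^ l <= (2 * / t) ^ l.
    apply: pow_incr; split; first by have := Rinv_0_lt_compat t ht; lra.
    have : 1 <= / t by rewrite -Rinv_1; apply: Rinv_le_contravar; lra.
    lra.
  rewrite Rpow_mult_distr pow_inv; nra.
have : 2 * (2 ^ l * (1 + / t) ^ l) <= 2 * (2 ^ l * (2 ^ l * (1 + / t ^ l))).
  apply: Rmult_le_compat_l; first lra.
  by apply: Rmult_le_compat_l; lra.
rewrite h4; lra.
Qed.

Section Lincomb.
Context {q m : nat}.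
Implicit Types (c : 'I_m.+1 -> R) (u v : nat -> Vec q).

Lemma lincomb_sub k c u v :
  lincomb k c (fun j => vsub (u j) (v j)) = vsub (lincomb k c u) (lincomb k c v).
Proof.
apply: functional_extensionality => j; rewrite /lincomb /vsub /Rminus.
rewrite (_ : (- \big[Rplus/0]_(i < m.+1) (c i * v (k - m + i)%N j)) =
             \big[Rplus/0]_(i < m.+1) (-1 * (c i * v (k - m + i)%N j))); last first.
  by rewrite -big_distrr /=; ring.
rewrite -big_split; apply: eq_bigr => i _ /=; ring.
Qed.

Lemma lincomb_const k c (w : Vec q) :
  \big[Rplus/0]_(i < m.+1) c i = 1 -> lincomb k c (fun _ => w) = w.
Proof.
move=> hc; apply: functional_extensionality => j; rewrite /lincomb -big_distrl /= hc; ring.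
Qed.

Lemma lincomb_mapply {q'} (A : Mat q' q) k c v :
  mapply A (lincomb k c v) = lincomb k c (fun j => mapply A (v j)).
Proof.
apply: functional_extensionality => i; rewrite /mapply /lincomb.
under eq_bigr do rewrite big_distrr.
rewrite exchange_big; apply: eq_bigr => l _ /=; rewrite big_distrr; apply: eq_bigr => j _ /=; ring.
Qed.

Lemma norm2_lincomb k c v beta :
  (forall i : 'I_m.+1, norm2 (v (k - m + i)%N) <= beta) ->
  norm2 (lincomb k c v) <= \big[Rplus/0]_(i < m.+1) Rabs (c i) * beta.
Proof.
move=> H.
have -> : lincomb k c v = (fun j => \big[Rplus/0]_(i < m.+1) vscale (c i) (v (k - m + i)%N) j) by [].
eapply Rle_trans; first by apply: norm2_bigsum.
rewrite big_distrl; apply: big_Rle => i _ /=; rewrite norm2_scale.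
by apply: Rmult_le_compat_l; [apply: Rabs_pos | apply: H].
Qed.

Lemma sumabs_ge1 c : \big[Rplus/0]_(i < m.+1) c i = 1 -> 1 <= \big[Rplus/0]_(i < m.+1) Rabs (c i).
Proof.
move=> hc; rewrite -{1}hc.
apply: (big_ind2 (fun x y => x <= y)) => //; first lra.
  by move=> *; apply: Rplus_le_compat.
by move=> i _; apply: Rle_abs.
Qed.

End Lincomb.

Lemma affine_err {n p' m : nat} (F : Vec n -> Vec p') (A : Mat p' n) (xs : Vec n)
  (x : nat -> Vec n) k (c : 'I_m.+1 -> R) e0 e1 :
  \big[Rplus/0]_(i < m.+1) c i = 1 ->
  (forall i : 'I_m.+1, norm2 (vsub (F (x (k - m + i)%N)) (mapply A (vsub (x (k - m + i)%N) xs))) <= e0) ->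
  norm2 (vsub (F (lincomb k c x)) (mapply A (vsub (lincomb k c x) xs))) <= e1 ->
  norm2 (vsub (F (lincomb k c x)) (lincomb k c (fun j => F (x j)))) <=
    e1 + \big[Rplus/0]_(i < m.+1) Rabs (c i) * e0.
Proof.
move=> hc h0 h1.
set xt := lincomb k c x.
have hT : lincomb k c (fun j => mapply A (vsub (x j) xs)) = mapply A (vsub xt xs).
  by rewrite -lincomb_mapply lincomb_sub lincomb_const.
have e : vsub (F xt) (lincomb k c (fun j => F (x j))) =
   vsub (vsub (F xt) (mapply A (vsub xt xs)))
        (lincomb k c (fun j => vsub (F (x j)) (mapply A (vsub (x j) xs)))).
  rewrite lincomb_sub hT; apply: functional_extensionality => j; rewrite /vsub /=; ring.
rewrite e; apply: Rle_trans (norm2_sub _ _) _.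
apply: Rplus_le_compat => //.
exact: norm2_lincomb.
Qed.

Lemma lincomb_lc {q m : nat} k (c : 'I_m.+1 -> R) (v : nat -> Vec q) :
  lincomb k c v = lc (fun i => v (k - m + i)%N) m (fun n => c (inord n)).
Proof.
apply: functional_extensionality => j; rewrite /lc /lincomb big_mkord.
by apply: eq_bigr => i _; rewrite inord_val.
Qed.

Lemma csum_ord {m : nat} (c : 'I_m.+1 -> R) :
  csum m (fun n => c (inord n)) = \big[Rplus/0]_(i < m.+1) c i.
Proof. by rewrite /csum big_mkord; apply: eq_bigr => i _; rewrite inord_val. Qed.

Lemma norm2_le_sub {p} (u v : Vec p) : norm2 u <= norm2 v + norm2 (vsub u v).
Proof.
have := norm2_tri u v vzero.
have -> : vsub u vzero = u by apply: functional_extensionality => j; rewrite /vsub /vzero /=; ring.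
have -> : vsub v vzero = v by apply: functional_extensionality => j; rewrite /vsub /vzero /=; ring.
rewrite norm2_subC; lra.
Qed.

Lemma numbound (K1 K0 S dm maxsq sigma u u2 Cm Cp mR pR : R) :
  0 <= K1 <= K0 -> 1 <= S -> 0 <= dm -> dm ^ 2 = maxsq / sigma ^ 2 -> 0 < sigma ->
  0 <= u -> u2 = u ^ 2 -> 0 <= Cm <= Cp -> 0 <= mR <= pR -> S <= mR * (Cm * (1 + u)) ->
  K1 * ((S * dm) ^ 2 + S * dm ^ 2) <= K0 * (4 * pR ^ 2 * Cp ^ 2 / sigma ^ 2) * (1 + u2) * maxsq.
Proof.
move=> [hK1 hK] hS hdm hdm2 hsig hu hu2 [hCm hC] [hmR hpR] hSb.
have hms : maxsq = dm ^ 2 * sigma ^ 2.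
  rewrite hdm2; field; lra.
have hQ : (S * dm) ^ 2 + S * dm ^ 2 <= 2 * S ^ 2 * dm ^ 2.
  have : S * dm ^ 2 <= S ^ 2 * dm ^ 2.
    apply: Rmult_le_compat_r; [apply: pow_le; lra | simpl; nra].
  simpl; nra.
have hS2 : S ^ 2 <= pR ^ 2 * Cp ^ 2 * (2 * (1 + u2)).
  have h1 : S ^ 2 <= (mR * (Cm * (1 + u))) ^ 2 by apply: pow_incr; lra.
  have h2 : (mR * (Cm * (1 + u))) ^ 2 <= (pR * (Cp * (1 + u))) ^ 2.
    apply: pow_incr; split; first by apply: Rmult_le_pos; [lra | apply: Rmult_le_pos; lra].
    apply: Rmult_le_compat; try lra; first by apply: Rmult_le_pos; lra.
    apply: Rmult_le_compat; lra.
  have h3 : (pR * (Cp * (1 + u))) ^ 2 = pR ^ 2 * Cp ^ 2 * (1 + u) ^ 2 by ring.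
  have h4 : (1 + u) ^ 2 <= 2 * (1 + u2) by rewrite hu2; have := Rle_0_sqr (u - 1); rewrite /Rsqr; simpl; nra.
  have h5 : 0 <= pR ^ 2 * Cp ^ 2 by apply: Rmult_le_pos; apply: pow_le; lra.
  have := Rmult_le_compat_l _ _ _ h5 h4; lra.
have hQ2 : (S * dm) ^ 2 + S * dm ^ 2 <= 4 * pR ^ 2 * Cp ^ 2 * (1 + u2) * dm ^ 2.
  have hd2 : 0 <= dm ^ 2 by apply: pow_le.
  have := Rmult_le_compat_r _ _ _ hd2 hS2; nra.
have hQ0 : 0 <= (S * dm) ^ 2 + S * dm ^ 2.
  have : 0 <= S * dm ^ 2 by apply: Rmult_le_pos; [lra | apply: pow_le].
  have : 0 <= (S * dm) ^ 2 by apply: pow_le; nra.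
  lra.
have e : K0 * (4 * pR ^ 2 * Cp ^ 2 / sigma ^ 2) * (1 + u2) * maxsq =
         K0 * (4 * pR ^ 2 * Cp ^ 2 * (1 + u2) * dm ^ 2).
  rewrite hms; field; lra.
rewrite e.
apply: Rle_trans (_ : K0 * ((S * dm) ^ 2 + S * dm ^ 2) <= _).
  by apply: Rmult_le_compat_r.
by apply: Rmult_le_compat_l; lra.
Qed.

Lemma proj_set_fix {n} (S : Vec n -> Prop) (y : Vec n) : S y -> proj_set S y = y.
Proof.
move=> hy; rewrite /proj_set.
have hn : nearest S y y.
  split => // z _; rewrite (_ : vsub y y = vzero); last first.
    by apply: functional_extensionality => j; rewrite /vsub /vzero /=; ring.
  rewrite norm2_zero; apply: norm2_ge0.
have [_ h] := epsilon_spec (inhabits y) (nearest S y) (ex_intro _ y hn).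
move: h; set z := epsilon _ _ => h.
have h0 := h y hy.
rewrite (_ : vsub y y = vzero) in h0; last first.
  by apply: functional_extensionality => j; rewrite /vsub /vzero /=; ring.
rewrite norm2_zero in h0.
have hz : norm2 (vsub y z) = 0 by have := norm2_ge0 (vsub y z); lra.
have := norm2_eq0 _ hz => e.
apply: functional_extensionality => j; have := f_equal (fun v => v j) e.
rewrite /vsub /vzero /= => hj; lra.
Qed.

Lemma lincomb_ext {q m : nat} k (c : 'I_m.+1 -> R) (v w : nat -> Vec q) :
  (forall i : 'I_m.+1, v (k - m + i)%N = w (k - m + i)%N) -> lincomb k c v = lincomb k c w.
Proof.
move=> H; apply: functional_extensionality => j; rewrite /lincomb.
by apply: eq_bigr => i _; rewrite H.
Qed.

Theorem lemma3p1 :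
  exists C : nat -> R, (forall m, 0 < C m) /\
  forall (n p : nat) (Sig : Vec n -> Prop) (V : Vec n -> Prop)
         (f : Vec n -> Vec p) (g : Vec n -> Vec n) (xs : Vec n),
    (1 <= n)%nat -> (1 <= p)%nat ->
    submanifold Sig -> is_open V ->
    CkV 2 V f -> CkV 2 V g -> (forall x, V x -> Sig (g x)) ->
    V xs -> Sig xs -> g xs = xs -> f xs = vzero ->
  forall (K sigma : R),
    0 < K < 1 ->
    (forall x, V x -> V (g x) -> Sig x -> norm2 (f (g x)) <= K * norm2 (f x)) ->
    0 < sigma ->
    (forall x, V x -> Sig x -> sigma * norm2 (vsub x xs) <= norm2 (f x)) ->
  forall (U : Vec n -> Prop) (L L' M : R) (PT : Mat n n),
    is_open U -> U xs -> (forall x, U x -> V x /\ V (g x)) ->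
    (* (i) *)
    (forall x y, U x -> U y ->
       norm2 (vsub (f x) (f y)) <= 2 * frob (jac f xs) * norm2 (vsub x y)) ->
    (forall x y, U x -> U y ->
       norm2 (vsub (f (g x)) (f (g y)))
         <= 2 * frob (mmul (jac f xs) (jac g xs)) * norm2 (vsub x y)) ->
    (* (ii) *)
    0 < L -> 0 < L' ->
    (forall x, U x ->
       norm2 (vsub (f x) (mapply (jac f xs) (vsub x xs)))
         <= L / 2 * norm2 (vsub x xs) ^ 2) ->
    (forall x, U x ->
       norm2 (vsub (vsub (g x) xs) (mapply (jac g xs) (vsub x xs)))
         <= L' / 2 * norm2 (vsub x xs) ^ 2) ->
    (* (iii) *)
    (forall x, U x -> exists! y, nearest Sig x y) ->
    smooth_on U (proj_set Sig) ->
    (forall x, U x -> Sig (proj_set Sig x) /\ U (proj_set Sig x)) ->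
    orth_projector_onto PT (tangent Sig xs) ->
    0 < M ->
    (forall x, U x ->
       norm2 (vsub (proj_set Sig x) (vadd xs (mapply PT (vsub x xs))))
         <= M / 2 * norm2 (vsub x xs) ^ 2) ->
  exists kappa : R, 0 < kappa /\
  forall (t : R) (k m : nat) (x : nat -> Vec n),
    (1 <= m)%nat -> (m <= k)%nat -> 0 < t ->
    (forall i, (i <= m)%nat ->
       U (x (k - m + i)%nat) /\ Sig (x (k - m + i)%nat) /\ x (k - m + i)%nat <> xs) ->
    let r := fun j => f (x j) in
    (forall i, (1 <= i <= m)%nat ->
       dist2 (r (k - m + i)%nat) (affspan r k m i.-1)
         >= t * \big[Rmax/0]_(i <= j < m.+1) norm2 (r (k - m + j)%nat)) ->
    let D := dist2 vzero (affspan r k m m) in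
    let maxsq := \big[Rmax/0]_(0 <= i < m.+1) (norm2 (r (k - m + i)%nat) ^ 2) in
    aff_indep r k m /\ (m <= p)%nat /\
    (exists! c : 'I_m.+1 -> R,
        \big[Rplus/0]_(i < m.+1) c i = 1 /\ norm2 (lincomb k c r) = D) /\
    forall c : 'I_m.+1 -> R,
      \big[Rplus/0]_(i < m.+1) c i = 1 -> norm2 (lincomb k c r) = D ->
      (forall i, Rabs (c i) <= C m * (1 + / t ^ m)) /\
      let xt := lincomb k c x in
      let xa := lincomb k c (fun j => g (x j)) in
      U xt -> U (g xt) -> U xa ->
      (* version P *)
      (let x1 := g xt in
       norm2 (f x1) <= K * D + kappa * (1 + / t ^ (2 * m)) * maxsq /\
       (1 - K) * norm2 (f x1)
         <= K * dist2 (f x1) (affspan r k m m) + kappa * (1 + / t ^ (2 * m)) * maxsq) /\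
      (* version A, when Sigma = R^n *)
      ((forall y, Sig y) ->
       let x1 := xa in
       norm2 (f x1) <= K * D + kappa * (1 + / t ^ (2 * m)) * maxsq /\
       (1 - K) * norm2 (f x1)
         <= K * dist2 (f x1) (affspan r k m m) + kappa * (1 + / t ^ (2 * m)) * maxsq).
Proof.
exists (fun m => 2 * 4 ^ m); split.
  by move=> m; apply: Rmult_lt_0_compat; [lra | apply: pow_lt; lra].
move=> n p Sig V f g xs hn hp hSig hV hf hg hgS hVxs hSxs hgx hfx K sigma hK hA1 hsig hA2
  U L L' M PT hU hUxs hUV hi1 hi2 hL hL' hii1 hii2 hnear hsm hproj hPT hM hiii.
set a := frob (jac f xs).
set b := frob (mmul (jac f xs) (jac g xs)).
have ha : 0 <= a by apply: sqrt_pos.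
have hb : 0 <= b by apply: sqrt_pos.
set Cp := 2 * 4 ^ p.
have hCp : 0 < Cp by apply: Rmult_lt_0_compat; [lra | apply: pow_lt; lra].
set K0 := L / 2 + a * M + b * M + a * L' + 1.
have hK0 : 0 < K0 by rewrite /K0; have := Rmult_le_pos _ _ ha (Rlt_le _ _ hM);
  have := Rmult_le_pos _ _ hb (Rlt_le _ _ hM); have := Rmult_le_pos _ _ ha (Rlt_le _ _ hL'); lra.
have hp1 : 0 < INR p + 1 by have := pos_INR p; lra.
exists (K0 * (4 * (INR p + 1) ^ 2 * Cp ^ 2 / sigma ^ 2)); split.
  apply: Rmult_lt_0_compat => //; apply: Rmult_lt_0_compat.
    by apply: Rmult_lt_0_compat; [apply: Rmult_lt_0_compat; [lra|apply: pow_lt] | apply: pow_lt].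
  by apply: Rinv_0_lt_compat; apply: pow_lt.
move=> t k m x hm1 hmk ht hx r Hd D maxsq.
set s := fun i => r (k - m + i)%N.
have Hnz : forall i, (i <= m)%N -> s i <> vzero.
  move=> i hi hs0.
  have [hUi [hSi hne]] := hx i hi.
  have h := hA2 _ (proj1 (hUV _ hUi)) hSi.
  have : s i = f (x (k - m + i)%N) by [].
  move=> e; rewrite -e hs0 norm2_zero in h.
  have hpos : 0 < norm2 (vsub (x (k - m + i)%N) xs).
    apply: norm2_pos => hz; apply: hne; apply: functional_extensionality => j.
    have := f_equal (fun v => v j) hz; rewrite /vsub /vzero /= => hj; lra.
  have := Rmult_lt_0_compat _ _ hsig hpos; lra.
have Hd' : forall i, (1 <= i <= m)%N ->
  dist2 (s i) (Aff s i.-1) >= t * \big[Rmax/0]_(i <= j < m.+1) norm2 (s j) := Hd.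
have hmp : (m <= p)%N := m_le_p s m t ht Hnz Hd'.
have Horth := orth_le s m t ht Hnz Hd'.
have hAff : forall l, affspan r k m l = Aff s l by [].
set c0 := coef s m vzero.
have hvz : forall (q : nat) (v : Vec q), vsub v vzero = v.
  by move=> q v; apply: functional_extensionality => j; rewrite /vsub /vzero /=; ring.
have hP0 : D = norm2 (P s m vzero).
  rewrite /D hAff dist2_is; last by apply: Horth.
  by rewrite norm2_subC hvz.
have hlc : forall c : 'I_m.+1 -> R, lincomb k c r = lc s m (fun n => c (inord n)).
  by move=> c; rewrite lincomb_lc.
have hcs : forall c : 'I_m.+1 -> R, \big[Rplus/0]_(i < m.+1) c i = csum m (fun n => c (inord n)).
  by move=> c; rewrite csum_ord.
have hindep : forall cn, csum m cn = 0 -> lc s m cn = vzero -> forall i, (i <= m)%N -> cn i = 0.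
  exact: (indep s m t ht Hnz Hd' m (leqnn m)).
have huniq : forall c : 'I_m.+1 -> R, \big[Rplus/0]_(i < m.+1) c i = 1 ->
    norm2 (lincomb k c r) = D -> forall i : 'I_m.+1, c i = c0 i.
  move=> c hc1 hcD i.
  rewrite hlc in hcD; rewrite hcs in hc1.
  set cn := fun n => c (inord n) in hc1 hcD.
  have hpy := pyth s m vzero cn (Horth m (leqnn m) vzero) hc1.
  have e1 : dot (vsub vzero (lc s m cn)) (vsub vzero (lc s m cn)) = D * D.
    by rewrite -norm2_sq norm2_subC hvz hcD.
  have e2 : dot (vsub vzero (P s m vzero)) (vsub vzero (P s m vzero)) = D * D.
    by rewrite -norm2_sq norm2_subC hvz hP0.
  rewrite e1 e2 in hpy.
  have hz : vsub (P s m vzero) (lc s m cn) = vzero by apply: dot_eq0; lra.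
  have hd : lc s m (fun n => 1 * cn n + (-1) * c0 n) = vzero.
    rewrite lc_lin -/(P s m vzero).
    apply: functional_extensionality => j; have := f_equal (fun v => v j) hz.
    by rewrite /vadd /vscale /vsub /vzero /= => h; lra.
  have hd0 : csum m (fun n => 1 * cn n + (-1) * c0 n) = 0 by rewrite csum_lin hc1 csum_coef; ring.
  have := hindep _ hd0 hd i (ltac:(by rewrite -ltnS)).
  by rewrite /cn inord_val; lra.
have hc0sum : \big[Rplus/0]_(i < m.+1) c0 i = 1.
  rewrite hcs -(csum_coef s m vzero); apply: csum_ext => i hi; by rewrite inordK.
have hc0D : norm2 (lincomb k (fun i : 'I_m.+1 => c0 i) r) = D.
  rewrite hlc hP0 /P; congr norm2; apply: lc_ext => i hi; by rewrite inordK.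
have hc0b : forall i, Rabs (c0 i) <= 2 * 4 ^ m * (1 + / t ^ m).
  move=> i; apply: Rle_trans (Bd_bound t m ht).
  apply: (coef_bound s m t ht Hnz Hd' m (leqnn m)) => j /andP [hj1 hj2].
  rewrite norm2_zero Rmult_0_r.
  have hj : (j.-1 < m)%N by rewrite prednK.
  have [e _] := dE s m t ht Hnz Hd' _ hj.
  rewrite prednK // in e; rewrite e; apply: norm2_ge0.
split.
  move=> c hc hl i.
  rewrite hcs in hc; rewrite hlc in hl.
  have := hindep _ hc hl i (ltac:(by rewrite -ltnS)).
  by rewrite inord_val.
split; first exact hmp.
split.
  exists (fun i : 'I_m.+1 => c0 i); split; first by split.
  move=> c' [h1 h2]; apply: functional_extensionality => i; by rewrite (huniq c' h1 h2).
move=> c hc1 hcD.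
have hci := huniq c hc1 hcD.
split.
  by move=> i; rewrite hci; apply: hc0b.
move=> xt xa hUxt hUgxt hUxa.
set S := \big[Rplus/0]_(i < m.+1) Rabs (c i).
have hS1 : 1 <= S := sumabs_ge1 c hc1.
set Cm := 2 * 4 ^ m.
have hSb : S <= (INR m + 1) * (Cm * (1 + / t ^ m)).
  rewrite -S_INR -sum_ord1 big_distrl /S; apply: big_Rle => i _.
  by rewrite /= Rmult_1_l hci; apply: hc0b.
have hmax0 : 0 <= maxsq by apply: bigmax_ge0.
set rho := sqrt maxsq.
have hri : forall i : 'I_m.+1, norm2 (r (k - m + i)%N) <= rho.
  move=> i; rewrite -(sqrt_pow2 (norm2 (r (k - m + i)%N))); last by apply: norm2_ge0.
  apply: sqrt_le_1_alt.
  apply: (@bigmax_ge _ _ (fun i => norm2 (r (k - m + i)%N) ^ 2)).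
  by rewrite mem_index_iota /= ltn_ord.
have hxi : forall i : 'I_m.+1, U (x (k - m + i)%N) /\ Sig (x (k - m + i)%N).
  by move=> i; have [h1 [h2 _]] := hx i (ltac:(by rewrite -ltnS)).
set dm := rho / sigma.
have hdm0 : 0 <= dm by apply: Rmult_le_pos; [apply: sqrt_pos | apply: Rlt_le; apply: Rinv_0_lt_compat].
have hdi : forall i : 'I_m.+1, norm2 (vsub (x (k - m + i)%N) xs) <= dm.
  move=> i; have [hU1 hS1'] := hxi i.
  have h := hA2 _ (proj1 (hUV _ hU1)) hS1'.
  have h' := hri i; rewrite /r in h'.
  have : sigma * norm2 (vsub (x (k - m + i)%N) xs) <= rho by lra.
  move=> h2; rewrite /dm; apply: (Rmult_le_reg_l sigma) => //.
  rewrite /Rdiv; field_simplify; lra.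
have hdi2 : forall i : 'I_m.+1, norm2 (vsub (x (k - m + i)%N) xs) ^ 2 <= dm ^ 2.
  by move=> i; apply: pow_incr; split; [apply: norm2_ge0 | apply: hdi].
have hxt : vsub xt xs = lincomb k c (fun j => vsub (x j) xs).
  by rewrite lincomb_sub lincomb_const.
have hDt : norm2 (vsub xt xs) <= S * dm.
  rewrite hxt /S; exact: (norm2_lincomb k c (fun j => vsub (x j) xs) dm hdi).
have hDt2 : norm2 (vsub xt xs) ^ 2 <= (S * dm) ^ 2.
  by apply: pow_incr; split; [apply: norm2_ge0 | apply: hDt].
set Q := (S * dm) ^ 2 + S * dm ^ 2.
have herr : forall (q' : nat) (F : Vec n -> Vec q') (A : Mat q' n) (k0 : R), 0 <= k0 ->
  (forall y, U y -> norm2 (vsub (F y) (mapply A (vsub y xs))) <= k0 * norm2 (vsub y xs) ^ 2) ->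
  norm2 (vsub (F xt) (lincomb k c (fun j => F (x j)))) <= k0 * Q.
  move=> q' F A k0 hk0 hF.
  have h := affine_err F A xs x k c (k0 * dm ^ 2) (k0 * (S * dm) ^ 2) hc1.
  have h' : norm2 (vsub (F xt) (lincomb k c (fun j => F (x j)))) <= k0 * (S * dm) ^ 2 + S * (k0 * dm ^ 2).
    apply: h.
      move=> i; apply: Rle_trans (hF _ (proj1 (hxi i))) _.
      by apply: Rmult_le_compat_l => //; apply: hdi2.
    apply: Rle_trans (hF _ hUxt) _.
    by apply: Rmult_le_compat_l => //; apply: hDt2.
  rewrite /Q; lra.
have hQ0 : 0 <= Q.
  rewrite /Q; have : 0 <= S * dm ^ 2 by apply: Rmult_le_pos; [lra | apply: pow_le].
  have : 0 <= (S * dm) ^ 2 by apply: pow_le; apply: Rmult_le_pos; lra.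
  lra.
have hEf : norm2 (vsub (f xt) (lincomb k c r)) <= L / 2 * Q.
  by apply: (herr _ f (jac f xs) (L / 2)); [lra | exact hii1].
have hEg : norm2 (vsub (g xt) xa) <= L' / 2 * Q.
  have h := herr _ (fun y => vsub (g y) xs) (jac g xs) (L' / 2) (ltac:(lra)) hii2.
  rewrite lincomb_sub lincomb_const // in h.
  rewrite (_ : vsub (vsub (g xt) xs) (vsub xa xs) = vsub (g xt) xa) in h => //.
  by apply: functional_extensionality => j; rewrite /vsub /=; ring.
set y := proj_set Sig xt.
have [hSy hUy] := hproj xt hUxt.
have hEp : norm2 (vsub y xt) <= M / 2 * Q.
  have h := herr _ (fun z => vsub (proj_set Sig z) xs) PT (M / 2) (ltac:(lra)).
  have h' : norm2 (vsub (vsub (proj_set Sig xt) xs) (lincomb k c (fun j => vsub (proj_set Sig (x j)) xs))) <= M / 2 * Q.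
    apply: h => z hz; rewrite (_ : vsub (vsub (proj_set Sig z) xs) (mapply PT (vsub z xs)) =
        vsub (proj_set Sig z) (vadd xs (mapply PT (vsub z xs)))); first by apply: hiii.
    by apply: functional_extensionality => j; rewrite /vsub /vadd /=; ring.
  rewrite (lincomb_ext k c _ (fun j => vsub (x j) xs)) in h'; last first.
    by move=> i; rewrite proj_set_fix //; apply: (proj2 (hxi i)).
  rewrite -hxt -/y in h'.
  rewrite (_ : vsub (vsub y xs) (vsub xt xs) = vsub y xt) in h' => //.
  by apply: functional_extensionality => j; rewrite /vsub /=; ring.
have hfxt : norm2 (f xt) <= D + L / 2 * Q.
  have := norm2_le_sub (f xt) (lincomb k c r); rewrite hcD; lra.
have hfy : norm2 (f y) <= norm2 (f xt) + 2 * a * (M / 2 * Q).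
  have h1 := norm2_le_sub (f y) (f xt).
  have h2 := hi1 y xt hUy hUxt; rewrite -/a in h2.
  have : 2 * a * norm2 (vsub y xt) <= 2 * a * (M / 2 * Q) by apply: Rmult_le_compat_l; lra.
  lra.
have hfgy : norm2 (f (g y)) <= K * norm2 (f y).
  by apply: hA1 => //; [apply: (proj1 (hUV _ hUy)) | apply: (proj2 (hUV _ hUy))].
have hfgxt : norm2 (f (g xt)) <= norm2 (f (g y)) + 2 * b * (M / 2 * Q).
  have h1 := norm2_le_sub (f (g xt)) (f (g y)).
  have h2 := hi2 xt y hUxt hUy; rewrite -/b in h2.
  have e1 := norm2_subC (f (g xt)) (f (g y)); rewrite (norm2_subC xt y) in h2.
  have : 2 * b * norm2 (vsub y xt) <= 2 * b * (M / 2 * Q) by apply: Rmult_le_compat_l; lra.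
  lra.
have hP1 : norm2 (f (g xt)) <= K * D + (L / 2 + a * M + b * M) * Q.
  have hX : K * ((L / 2 + a * M) * Q) <= (L / 2 + a * M) * Q.
    have : 0 <= (L / 2 + a * M) * Q by apply: Rmult_le_pos => //; have := Rmult_le_pos _ _ ha (Rlt_le _ _ hM); lra.
    nra.
  have : K * norm2 (f y) <= K * (D + L / 2 * Q + 2 * a * (M / 2 * Q)) by apply: Rmult_le_compat_l; lra.
  have : 0 <= b * M * Q by apply: Rmult_le_pos => //; apply: Rmult_le_pos => //; lra.
  lra.
have hA1' : norm2 (f xa) <= K * D + (L / 2 + a * M + b * M + a * L') * Q.
  have h1 := norm2_le_sub (f xa) (f (g xt)).
  have h2 := hi1 xa (g xt) hUxa hUgxt; rewrite -/a (norm2_subC xa (g xt)) in h2.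
  have : 2 * a * norm2 (vsub (g xt) xa) <= 2 * a * (L' / 2 * Q) by apply: Rmult_le_compat_l; lra.
  lra.
have hnum : (L / 2 + a * M + b * M + a * L') * Q <=
    K0 * (4 * (INR p + 1) ^ 2 * Cp ^ 2 / sigma ^ 2) * (1 + / t ^ (2 * m)) * maxsq.
  apply: (numbound _ _ _ _ _ _ (/ t ^ m) (/ t ^ (2 * m)%N) Cm _ (INR m + 1)).
  - split; last by rewrite /K0; lra.
    have := Rmult_le_pos _ _ ha (Rlt_le _ _ hM); have := Rmult_le_pos _ _ hb (Rlt_le _ _ hM).
    have := Rmult_le_pos _ _ ha (Rlt_le _ _ hL'); lra.
  - exact hS1.
  - exact hdm0.
  - rewrite /dm /rho /Rdiv Rpow_mult_distr pow2_sqrt // pow_inv //.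
  - exact hsig.
  - by apply: Rlt_le; apply: Rinv_0_lt_compat; apply: pow_lt.
  - by rewrite (mulnC 2%N m) pow_mult pow_inv.
  - split; first by apply: Rmult_le_pos; [lra | apply: pow_le; lra].
    rewrite /Cm /Cp; apply: Rmult_le_compat_l; first lra.
    by apply: Rle_pow; [lra | apply/leP].
  - split; first by have := pos_INR m; lra.
    by have := le_INR m p (ltac:(by apply/leP)); lra.
  - exact hSb.
have hDle : forall v : Vec p, D <= norm2 v + dist2 v (affspan r k m m).
  move=> v; rewrite hAff (dist2_is _ _ _ (Horth m (leqnn m) v)) hP0.
  have h1 := nearest_le _ _ _ _ (Horth m (leqnn m) vzero) (P_aff s m v).
  rewrite norm2_subC hvz norm2_subC hvz in h1.
  have h2 := norm2_le_sub (P s m v) v; rewrite norm2_subC in h2; lra.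
have haLQ : 0 <= a * L' * Q by apply: Rmult_le_pos => //; apply: Rmult_le_pos; lra.
split.
  cbv zeta; split; first lra.
  have := hDle (f (g xt)); move=> h.
  have : K * D <= K * (norm2 (f (g xt)) + dist2 (f (g xt)) (affspan r k m m)) by apply: Rmult_le_compat_l; lra.
  lra.
move=> _; cbv zeta; split; first lra.
have := hDle (f xa); move=> h.
have : K * D <= K * (norm2 (f xa) + dist2 (f xa) (affspan r k m m)) by apply: Rmult_le_compat_l; lra.
lra.
Qed.
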